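(* Let $a>1$, $C_j(n,a)=\binom{n}{j}\left(\frac{1+a}{2}\right)^{n-j}\left(\frac{1-a}{2}\right)^j$, $F_n(x,a)=\sum_{j=0}^nC_j(n,a)e^{i(1-\frac{2j}{n})x}$, and $\mathtt{H}_{k,n}(x)=h_k(x)F_n(x,a)$ for $k\geq0$, $n\geq1$. Then for every $z\in\mathbb{C}$, $$\mathcal{B}(\mathtt{H}_{k,n})(z)=\frac{1}{\sqrt{k!}}\sum_{j=0}^nC_j(n,a)\left(z+\tfrac{i}{\sqrt2}(1-2j/n)\right)^k e^{\frac{iz}{\sqrt2}(1-2j/n)-\frac14(1-2j/n)^2}.$$
   Context: $h_k(x)=(2^kk!\sqrt\pi)^{-1/2}H_k(x)e^{-x^2/2}$ are the normalized Hermite functions, $H_k(x)=(-1)^ke^{x^2}\frac{d^k}{dx^k}e^{-x^2}$. $\mathcal{B}(\varphi)(z)=\pi^{-1/4}\int_{\mathbb{R}}e^{-\frac12(z^2+x^2)+\sqrt2 zx}\varphi(x)\,dx$ is the Segal-Bargmann transform; it satisfies $\mathcal{B}(h_k)(z)=z^k/\sqrt{k!}$. *)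

(* Defs.v *)
From Stdlib Require Import Reals Factorial.
From Coquelicot Require Import Coquelicot.

Open Scope R_scope.

Definition cexp (w : C) : C :=
  (exp (Re w) * cos (Im w), exp (Re w) * sin (Im w)).

Definition hermiteH (k : nat) (x : R) : R :=
  (-1) ^ k * exp (x ^ 2) * Derive_n (fun t => exp (- t ^ 2)) k x.

Definition hermite_fun (k : nat) (x : R) : R :=
  / sqrt (2 ^ k * INR (fact k) * sqrt PI) * hermiteH k x * exp (- x ^ 2 / 2).

Definition SB_integrand (phi : R -> C) (z : C) (x : R) : C :=
  (RtoC (/ Rpower PI (1/4)) *
   cexp (- (z * z + RtoC (x * x)) / RtoC 2 + RtoC (sqrt 2) * z * RtoC x)
   * phi x)%C.

Definition is_SegalBargmann (phi : R -> C) (z v : C) : Prop :=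
  @is_RInt_gen C_R_NormedModule (SB_integrand phi z) (Rbar_locally m_infty) (Rbar_locally p_infty) v.

Definition Ccoef (n j : nat) (a : R) : R :=
  Binomial.C n j * ((1 + a) / 2) ^ (n - j) * ((1 - a) / 2) ^ j.

Definition lam (n j : nat) : R := 1 - 2 * INR j / INR n.

Definition Fn (n : nat) (x a : R) : C :=
  sum_n (fun j => (RtoC (Ccoef n j a) * cexp (Ci * RtoC (lam n j * x)))%C) n.

Definition Hkn (k n : nat) (a : R) (x : R) : C :=
  (RtoC (hermite_fun k x) * Fn n x a)%C.

(* Main.v *)
Require Import Defs.
From Stdlib Require Import Reals Factorial.
From Coquelicot Require Import Coquelicot.
From Stdlib Require Import Lra Lia.
Open Scope R_scope.


Lemma pow1p_le_exp (y : R) (m : nat) : 0 <= y -> (1 + y) ^ m <= exp (INR m * y).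
Proof.
  intros Hy. induction m as [|m IH].
  - simpl. rewrite Rmult_0_l, exp_0. lra.
  - rewrite S_INR. replace ((INR m + 1) * y) with (y + INR m * y) by ring.
    rewrite exp_plus. simpl.
    apply Rmult_le_compat; try lra.
    + apply pow_le; lra.
    + pose proof (exp_ineq1_le y). lra.
Qed.

Lemma decay (m : nat) (c : R) : 0 <= c -> forall eps, 0 < eps ->
  exists N, 0 <= N /\ forall x, N < Rabs x ->
    (1 + Rabs x) ^ m * exp (c * Rabs x - x ^ 2) < eps.
Proof.
  intros Hc eps Heps.
  set (K := INR m + c).
  assert (HK : 0 <= K) by (unfold K; pose proof (pos_INR m); lra).
  exists (K + 1 + Rabs (ln eps)). split.
  { pose proof (Rabs_pos (ln eps)); lra. }
  intros x Hx. rewrite <- pow2_abs. set (y := Rabs x) in *.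
  assert (Hy : 0 <= y) by apply Rabs_pos.
  eapply Rle_lt_trans.
  { apply Rmult_le_compat_r. apply Rlt_le, exp_pos. apply pow1p_le_exp; exact Hy. }
  rewrite <- exp_plus.
  rewrite <- (exp_ln eps Heps). apply exp_increasing.
  pose proof (Rle_abs (- ln eps)). rewrite Rabs_Ropp in H.
  assert (K * y - y ^ 2 <= - y).
  { assert (0 <= y * (y - K - 1)) by (pose proof (Rabs_pos (ln eps)); apply Rmult_le_pos; lra). replace (y ^ 2) with (y * y) by ring. lra. }
  unfold K in *. lra.
Qed.


Definition gs (t : R) : R := exp (- t ^ 2).
Definition DH (m : nat) (x : R) : R := Derive_n (fun t => exp (- t ^ 2)) m x.

Lemma D0 x : DH 0 x = exp (- x ^ 2).
Proof. reflexivity. Qed.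

Lemma DS m x : DH (S m) x = Derive (DH m) x.
Proof. reflexivity. Qed.

Lemma D1 x : DH 1 x = -2 * x * exp (- x ^ 2).
Proof.
  rewrite DS. apply is_derive_unique. unfold DH; simpl.
  auto_derive; auto. ring.
Qed.

Lemma D2 x : DH 2 x = -2 * x * DH 1 x - 2 * INR 1 * DH 0 x.
Proof.
  rewrite DS. rewrite (Derive_ext _ (fun x => -2 * x * exp (- x ^ 2))) by apply D1.
  rewrite D1, D0. apply is_derive_unique. auto_derive; auto. simpl. ring.
Qed.

Lemma D_rec m : (forall x, ex_derive (DH m) x) /\ (forall x, ex_derive (DH (S m)) x) /\
  (forall x, DH (S (S m)) x = -2 * x * DH (S m) x - 2 * INR (S m) * DH m x).
Proof.
  induction m as [|m [H1 [H2 H3]]].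
  - split; [|split].
    + intros x. unfold DH; simpl. auto_derive; auto.
    + intros x. apply (ex_derive_ext (fun x => -2 * x * exp (- x ^ 2))).
      intros; symmetry; apply D1. auto_derive; auto.
    + apply D2.
  - split; [exact H2|split].
    + intros x. eapply ex_derive_ext. intros t; symmetry; apply H3.
      auto_derive. repeat split; auto.
    + intros x. rewrite (DS (S (S m))).
      rewrite (Derive_ext _ (fun x => -2 * x * DH (S m) x - 2 * INR (S m) * DH m x)) by apply H3.
      set (r := INR (S m)).
      apply is_derive_unique. auto_derive. repeat split; auto.
      rewrite <- !DS. unfold r. rewrite (S_INR (S m)). ring.
Qed.

Lemma D_ex_derive m x : ex_derive (DH m) x.
Proof. apply (D_rec m). Qed.

Lemma D_is_derive m x : is_derive (DH m) x (DH (S m) x).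
Proof. rewrite DS. apply Derive_correct, D_ex_derive. Qed.

Lemma D_cont m x : continuous (DH m) x.
Proof. apply (ex_derive_continuous (K:=R_AbsRing) (DH m)), D_ex_derive. Qed.

Lemma D_bound2 m : (exists M, 0 <= M /\ forall x, Rabs (DH m x) <= M * (1 + Rabs x) ^ m * exp (- x ^ 2))
  /\ (exists M, 0 <= M /\ forall x, Rabs (DH (S m) x) <= M * (1 + Rabs x) ^ (S m) * exp (- x ^ 2)).
Proof.
  induction m as [|m [[M0 [HM0 B0]] [M1 [HM1 B1]]]].
  - split.
    + exists 1. split; [lra|]. intros x. rewrite D0. rewrite pow_O.
      rewrite Rabs_right. lra. apply Rle_ge, Rlt_le, exp_pos.
    + exists 2. split; [lra|]. intros x. rewrite D1, pow_1.
      rewrite !Rabs_mult, (Rabs_right (exp _)) by (apply Rle_ge, Rlt_le, exp_pos).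
      replace (Rabs (-2)) with 2 by (rewrite Rabs_left; lra).
      pose proof (exp_pos (- x ^ 2)). pose proof (Rabs_pos x). nra.
  - split.
    + exists M1; split; auto.
    + exists (2 * M1 + 2 * INR (S m) * M0). split.
      { pose proof (pos_INR (S m)). nra. }
      intros x. rewrite (proj2 (proj2 (D_rec m))).
      pose proof (B0 x) as b0. pose proof (B1 x) as b1.
      set (y := Rabs x) in *. set (E := exp (- x ^ 2)) in *.
      set (n := INR (S m)) in *.
      assert (HE : 0 < E) by apply exp_pos.
      assert (Hy : 0 <= y) by apply Rabs_pos.
      assert (Hn : 0 <= n) by apply pos_INR.
      assert (Hp : 0 <= (1 + y) ^ m) by (apply pow_le; lra).
      assert (Ha : Rabs (-2 * x * DH (S m) x) = 2 * y * Rabs (DH (S m) x)).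
      { rewrite !Rabs_mult. replace (Rabs (-2)) with 2 by (rewrite Rabs_left; lra). reflexivity. }
      assert (Hb : Rabs (2 * n * DH m x) = 2 * n * Rabs (DH m x)).
      { rewrite !Rabs_mult. rewrite (Rabs_right 2), (Rabs_right n) by lra. reflexivity. }
      unfold Rminus. eapply Rle_trans; [apply Rabs_triang|]. rewrite Rabs_Ropp, Ha, Hb.
      change ((1 + y) ^ S m) with ((1 + y) * (1 + y) ^ m) in b1.
      change ((1 + y) ^ S (S m)) with ((1 + y) * ((1 + y) * (1 + y) ^ m)).
      assert (2 * y * Rabs (DH (S m) x) <= 2 * (1 + y) * (M1 * ((1 + y) * (1 + y) ^ m) * E)).
      { apply Rmult_le_compat; try nra. apply Rabs_pos. }
      assert (2 * n * Rabs (DH m x) <= 2 * n * ((1 + y) * (1 + y) * (M0 * (1 + y) ^ m * E))).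
      { apply Rmult_le_compat_l. lra. eapply Rle_trans. apply b0.
        assert (0 <= M0 * (1 + y) ^ m * E) by (apply Rmult_le_pos; [apply Rmult_le_pos|]; lra).
        assert (1 <= (1 + y) * (1 + y)) by nra. nra. }
      assert (0 <= M0 * (1 + y) ^ m * E) by (apply Rmult_le_pos; [apply Rmult_le_pos|]; lra).
      assert (0 <= M1 * (1 + y) ^ m * E) by (apply Rmult_le_pos; [apply Rmult_le_pos|]; lra).
      nra.
Qed.

Lemma D_bound m : exists M, 0 <= M /\ forall x, Rabs (DH m x) <= M * (1 + Rabs x) ^ m * exp (- x ^ 2).
Proof. apply (D_bound2 m). Qed.


Lemma cexp_add p q : cexp (p + q)%C = (cexp p * cexp q)%C.
Proof.
  unfold cexp. destruct p as [p1 p2], q as [q1 q2]. simpl.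
  rewrite exp_plus, cos_plus, sin_plus.
  apply injective_projections; simpl; ring.
Qed.

Lemma cexp_R r : cexp (RtoC r) = RtoC (exp r).
Proof.
  unfold cexp, RtoC. simpl. rewrite cos_0, sin_0.
  apply injective_projections; simpl; ring.
Qed.

Lemma cexp_0 : cexp (RtoC 0) = RtoC 1.
Proof. rewrite cexp_R, exp_0. reflexivity. Qed.

Lemma Cmod_cexp w : Cmod (cexp w) = exp (Re w).
Proof.
  unfold Cmod. unfold cexp at 1 2. cbn [fst snd].
  replace ((exp (Re w) * cos (Im w)) ^ 2 + (exp (Re w) * sin (Im w)) ^ 2)
    with (exp (Re w) ^ 2 * (sin (Im w) ^ 2 + cos (Im w) ^ 2)) by ring.
  rewrite <- !Rsqr_pow2, sin2_cos2, Rmult_1_r.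
  apply sqrt_Rsqr. apply Rlt_le, exp_pos.
Qed.

Lemma Re_cexp w : Re (cexp w) = exp (Re w) * cos (Im w).
Proof. reflexivity. Qed.
Lemma Im_cexp w : Im (cexp w) = exp (Re w) * sin (Im w).
Proof. reflexivity. Qed.

Definition L2 (F : R -> R -> C) (l : C) : Prop :=
  forall eps, 0 < eps -> exists M, 0 <= M /\
    forall u v, u < - M -> M < v -> Cmod (F u v - l)%C < eps.

Definition IG (f : R -> C) (l : C) : Prop :=
  exists F : R -> R -> C,
    (forall u v, @is_RInt C_R_NormedModule f u v (F u v)) /\ L2 F l.

Lemma IG_gen f l : IG f l ->
  @is_RInt_gen C_R_NormedModule f (Rbar_locally m_infty) (Rbar_locally p_infty) l.
Proof.
  intros [F [HF HL]]. unfold is_RInt_gen, filterlimi.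
  intros P [eps HP]. simpl in *.
  destruct (HL eps (cond_pos eps)) as [M [HM HM2]].
  apply (Filter_prod _ _ _ (fun u => u < - M) (fun v => M < v)).
  - exists (- M). auto.
  - exists M. auto.
  - intros u v Hu Hv. exists (F u v). split. apply HF.
    apply HP. apply C_NormedModule_mixin_compat1. apply HM2; auto.
Qed.

Lemma is_RInt_C_pair (f : R -> C) u v (l : C) :
  is_RInt (fun t => Re (f t)) u v (Re l) -> is_RInt (fun t => Im (f t)) u v (Im l) ->
  @is_RInt C_R_NormedModule f u v l.
Proof.
  intros H1 H2. destruct l as [l1 l2].
  apply (is_RInt_fct_extend_pair (U:=R_NormedModule) (V:=R_NormedModule) f u v l1 l2); assumption.
Qed.

Lemma is_RInt_C_Re (f : R -> C) u v (l : C) :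
  @is_RInt C_R_NormedModule f u v l -> is_RInt (fun t => Re (f t)) u v (Re l).
Proof.
  intros H. apply (is_RInt_fct_extend_fst (U:=R_NormedModule) (V:=R_NormedModule) f u v l H).
Qed.

Lemma is_RInt_C_Im (f : R -> C) u v (l : C) :
  @is_RInt C_R_NormedModule f u v l -> is_RInt (fun t => Im (f t)) u v (Im l).
Proof.
  intros H. apply (is_RInt_fct_extend_snd (U:=R_NormedModule) (V:=R_NormedModule) f u v l H).
Qed.

Lemma is_RInt_Cmult (c : C) (f : R -> C) u v (l : C) :
  @is_RInt C_R_NormedModule f u v l ->
  @is_RInt C_R_NormedModule (fun t => c * f t)%C u v (c * l)%C.
Proof.
  intros H. pose proof (is_RInt_C_Re _ _ _ _ H) as H1. pose proof (is_RInt_C_Im _ _ _ _ H) as H2.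
  apply is_RInt_C_pair.
  - apply (is_RInt_ext (fun t => Re c * Re (f t) - Im c * Im (f t))).
    { intros; unfold Re, Im; simpl; ring. }
    replace (Re (c * l)%C) with (Re c * Re l - Im c * Im l) by (unfold Re, Im; simpl; ring).
    apply (is_RInt_minus (V:=R_NormedModule)); apply (is_RInt_scal (V:=R_NormedModule)); assumption.
  - apply (is_RInt_ext (fun t => Re c * Im (f t) + Im c * Re (f t))).
    { intros; unfold Re, Im; simpl; ring. }
    replace (Im (c * l)%C) with (Re c * Im l + Im c * Re l) by (unfold Re, Im; simpl; ring).
    apply (is_RInt_plus (V:=R_NormedModule)); apply (is_RInt_scal (V:=R_NormedModule)); assumption.
Qed.

Lemma is_RInt_Cplus (f g : R -> C) u v (l1 l2 : C) :
  @is_RInt C_R_NormedModule f u v l1 -> @is_RInt C_R_NormedModule g u v l2 ->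
  @is_RInt C_R_NormedModule (fun t => f t + g t)%C u v (l1 + l2)%C.
Proof.
  intros H1 H2. apply is_RInt_C_pair.
  - apply (is_RInt_ext (fun t => Re (f t) + Re (g t))). { intros; reflexivity. }
    apply (is_RInt_plus (V:=R_NormedModule)); apply is_RInt_C_Re; assumption.
  - apply (is_RInt_ext (fun t => Im (f t) + Im (g t))). { intros; reflexivity. }
    apply (is_RInt_plus (V:=R_NormedModule)); apply is_RInt_C_Im; assumption.
Qed.

Lemma L2_ext F G l : (forall u v, F u v = G u v) -> L2 F l -> L2 G l.
Proof.
  intros E H eps Heps. destruct (H eps Heps) as [M [HM H2]]. exists M; split; auto.
  intros; rewrite <- E; auto.
Qed.

Lemma L2_plus F G l1 l2 : L2 F l1 -> L2 G l2 -> L2 (fun u v => F u v + G u v)%C (l1 + l2)%C.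
Proof.
  intros H1 H2 eps Heps.
  destruct (H1 (eps/2)) as [M1 [HM1 K1]]. lra.
  destruct (H2 (eps/2)) as [M2 [HM2 K2]]. lra.
  exists (Rmax M1 M2). split. { eapply Rle_trans; [exact HM1|apply Rmax_l]. }
  intros u v Hu Hv.
  pose proof (Rmax_l M1 M2). pose proof (Rmax_r M1 M2).
  replace (F u v + G u v - (l1 + l2))%C with ((F u v - l1) + (G u v - l2))%C by ring.
  eapply Rle_lt_trans. apply Cmod_triangle.
  specialize (K1 u v ltac:(lra) ltac:(lra)). specialize (K2 u v ltac:(lra) ltac:(lra)). lra.
Qed.

Lemma L2_mult F l (c : C) : L2 F l -> L2 (fun u v => c * F u v)%C (c * l)%C.
Proof.
  intros H eps Heps.
  destruct (H (eps / (Cmod c + 1))) as [M [HM K]].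
  { apply Rdiv_lt_0_compat; auto. pose proof (Cmod_ge_0 c); lra. }
  exists M. split; auto. intros u v Hu Hv.
  replace (c * F u v - c * l)%C with (c * (F u v - l))%C by ring.
  rewrite Cmod_mult. specialize (K u v Hu Hv).
  pose proof (Cmod_ge_0 c). pose proof (Cmod_ge_0 (F u v - l)%C).
  apply Rmult_lt_compat_l with (r := Cmod c + 1) in K; [|lra].
  replace ((Cmod c + 1) * (eps / (Cmod c + 1))) with eps in K by (field; lra).
  nra.
Qed.

Lemma IG_ext f g l : (forall x, f x = g x) -> IG f l -> IG g l.
Proof.
  intros E [F [HF HL]]. exists F. split; auto.
  intros u v. eapply is_RInt_ext; [|apply HF]. intros; apply E.
Qed.

Lemma IG_plus f g l1 l2 : IG f l1 -> IG g l2 -> IG (fun x => f x + g x)%C (l1 + l2)%C.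
Proof.
  intros [F [HF HL]] [G [HG HK]]. exists (fun u v => F u v + G u v)%C. split.
  - intros; apply is_RInt_Cplus; auto.
  - apply L2_plus; auto.
Qed.

Lemma IG_mult (c : C) f l : IG f l -> IG (fun x => c * f x)%C (c * l)%C.
Proof.
  intros [F [HF HL]]. exists (fun u v => c * F u v)%C. split.
  - intros; apply is_RInt_Cmult; auto.
  - apply L2_mult; auto.
Qed.

Lemma IG_sum (f : nat -> R -> C) (l : nat -> C) n :
  (forall j, (j <= n)%nat -> IG (f j) (l j)) ->
  IG (fun x => sum_n (fun j => f j x) n) (sum_n l n).
Proof.
  induction n as [|n IH]; intros H.
  - rewrite sum_O. eapply IG_ext; [|apply (H 0%nat); lia]. intros; rewrite sum_O; reflexivity.
  - rewrite sum_Sn. eapply IG_ext; [|apply IG_plus; [apply IH; intros; apply H; lia|apply (H (S n)); lia]].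
    intros x. rewrite sum_Sn. reflexivity.
Qed.


Ltac req := match goal with |- ?a = ?b => change (@eq R a b) end.

Lemma cont_of_ex_derive (f : R -> R) x : ex_derive f x -> continuous f x.
Proof. intros H. apply (ex_derive_continuous (K:=R_AbsRing) f x H). Qed.

Lemma cpt_of_ex_derive (f : R -> R) x : ex_derive f x -> continuity_pt f x.
Proof. intros H. apply continuity_pt_filterlim. apply cont_of_ex_derive; auto. Qed.

Lemma cpt_exp x : continuity_pt exp x.
Proof. apply cpt_of_ex_derive. auto_derive; auto. Qed.
Lemma cpt_cos x : continuity_pt cos x.
Proof. apply cpt_of_ex_derive. auto_derive; auto. Qed.
Lemma cpt_sin x : continuity_pt sin x.
Proof. apply cpt_of_ex_derive. auto_derive; auto. Qed.

Definition g (x : R) : R := exp (- x ^ 2).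

Lemma g_cont x : continuous g x.
Proof. apply cont_of_ex_derive. unfold g. auto_derive; auto. Qed.

Lemma g_exRInt a b : ex_RInt g a b.
Proof. apply (ex_RInt_continuous (V:=R_CompleteNormedModule)). intros; apply g_cont. Qed.

Definition SG (T : R) : R := RInt g 0 T.
Definition Bf (T y : R) : R := exp (- T ^ 2 * (1 + y ^ 2)) / (1 + y ^ 2).
Definition BG (T : R) : R := RInt (fun y => Bf T y) 0 1.

Lemma S_derive T : is_derive SG T (g T).
Proof.
  apply (is_derive_RInt g SG 0 T).
  - apply filter_forall. intros x. apply (RInt_correct (V:=R_CompleteNormedModule)), g_exRInt.
  - apply g_cont.
Qed.

Lemma pos1y2 y : 0 < 1 + y ^ 2.
Proof. pose proof (pow2_ge_0 y). lra. Qed.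

Lemma Bf_derive T y : is_derive (fun u => Bf u y) T (-2 * T * exp (- T ^ 2 * (1 + y ^ 2))).
Proof.
  unfold Bf. pose proof (pos1y2 y). auto_derive. lra.
  replace (- (T * (T * 1)) * (1 + y * (y * 1))) with (- T ^ 2 * (1 + y ^ 2)) by ring.
  field. lra.
Qed.

Lemma Bf_cont T y : continuous (fun y => Bf T y) y.
Proof. apply cont_of_ex_derive. unfold Bf. pose proof (pos1y2 y). auto_derive. lra. Qed.

Lemma c2_exp_poly (h : R -> R -> R) x y : continuity_2d_pt h x y ->
  continuity_2d_pt (fun u v => exp (h u v)) x y.
Proof. intros H. apply continuity_1d_2d_pt_comp; auto. apply cpt_exp. Qed.

Lemma is_derive_eq (f : R -> R) x l1 l2 : is_derive f x l1 -> l1 = l2 -> is_derive f x l2.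
Proof. intros H ->; auto. Qed.

Lemma B_derive T : is_derive BG T (-2 * exp (- T ^ 2) * SG T).
Proof.
  unfold BG.
  eapply is_derive_eq.
  apply (is_derive_RInt_param (fun u y => Bf u y) 0 1 T).
  - apply filter_forall. intros x t _. eexists. apply Bf_derive.
  - intros t _. eapply continuity_2d_pt_ext.
    { intros x y. symmetry. apply is_derive_unique, Bf_derive. }
    apply continuity_2d_pt_mult. apply continuity_2d_pt_mult.
    apply continuity_2d_pt_const. apply continuity_2d_pt_id1.
    apply c2_exp_poly. apply continuity_2d_pt_mult.
    apply continuity_2d_pt_opp. apply continuity_2d_pt_mult. apply continuity_2d_pt_id1.
    apply continuity_2d_pt_mult. apply continuity_2d_pt_id1. apply continuity_2d_pt_const.
    apply continuity_2d_pt_plus. apply continuity_2d_pt_const.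
    apply continuity_2d_pt_mult. apply continuity_2d_pt_id2.
    apply continuity_2d_pt_mult. apply continuity_2d_pt_id2. apply continuity_2d_pt_const.
  - apply filter_forall. intros x. apply (ex_RInt_continuous (V:=R_CompleteNormedModule)). intros; apply Bf_cont.
  - rewrite (RInt_ext _ (fun y => -2 * T * exp (- T ^ 2 * (1 + y ^ 2)))).
    2:{ intros; apply is_derive_unique, Bf_derive. }
    (* substitution x = T y *)
    unfold SG.
    rewrite (RInt_ext _ (fun y => scal (-2 * exp (- T ^ 2)) (scal T (g (T * y + 0))))).
    2:{ intros x _. change (-2 * T * exp (- T ^ 2 * (1 + x ^ 2)) = (-2 * exp (- T ^ 2)) * (T * g (T * x + 0))).
        assert (E : exp (- T ^ 2 * (1 + x ^ 2)) = exp (- T ^ 2) * g (T * x + 0)).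
        { unfold g. rewrite <- exp_plus. f_equal. ring. }
        rewrite E. ring. }
    rewrite (RInt_scal (V:=R_CompleteNormedModule)).
    2:{ apply (ex_RInt_continuous (V:=R_CompleteNormedModule)). intros.
        apply cont_of_ex_derive. unfold g. change (fun y => scal T (exp (- (T * y + 0) ^ 2))) with (fun y => T * (exp (- (T * y + 0) ^ 2))). auto_derive; auto. }
    rewrite (RInt_comp_lin (V:=R_CompleteNormedModule)).
    2:{ apply g_exRInt. }
    rewrite Rmult_0_r, Rplus_0_r, Rmult_1_r, Rplus_0_r. reflexivity.
Qed.

Lemma Phi_const T : SG T ^ 2 + BG T = PI / 4.
Proof.
  assert (Hd : forall x, is_derive (fun T => SG T ^ 2 + BG T) x 0).
  { intros x. eapply is_derive_eq.
    apply (is_derive_plus (K:=R_AbsRing) (V:=R_NormedModule)).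
    apply (is_derive_pow (fun T => SG T) 2 x (g x)). apply S_derive. apply B_derive.
    unfold g; simpl. change (plus ?a ?b) with (a + b). ring. }
  assert (H0 : SG 0 ^ 2 + BG 0 = PI / 4).
  { unfold SG. rewrite (RInt_point (V:=R_CompleteNormedModule)).
    unfold BG. rewrite <- atan_1.
    replace (atan 1) with (atan 1 - atan 0) by (rewrite atan_0; ring).
    change zero with 0. rewrite pow_i by lia. rewrite Rplus_0_l.
    apply (is_RInt_unique (V:=R_CompleteNormedModule)).
    apply (is_RInt_derive (V:=R_CompleteNormedModule) atan).
    - intros y _. apply is_derive_Reals. replace (Bf 0 y) with (/ (1 + y ^ 2)).
      apply derivable_pt_lim_atan. unfold Bf.
      replace (- 0 ^ 2 * (1 + y ^ 2)) with 0 by ring. rewrite exp_0. unfold Rdiv. ring.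
    - intros y _. apply Bf_cont. }
  rewrite <- H0.
  destruct (MVT_gen (fun T => SG T ^ 2 + BG T) 0 T (fun _ => 0)) as [c [_ Hc]].
  - intros; apply Hd.
  - intros x _. apply cpt_of_ex_derive. eexists; apply Hd.
  - lra.
Qed.

Lemma exp_le x y : x <= y -> exp x <= exp y.
Proof. intros [H|H]. apply Rlt_le, exp_increasing; auto. subst; lra. Qed.

Lemma B_bounds T : 0 <= BG T <= exp (- T ^ 2).
Proof.
  assert (Hex : ex_RInt (fun y => Bf T y) 0 1).
  { apply (ex_RInt_continuous (V:=R_CompleteNormedModule)). intros; apply Bf_cont. }
  split.
  - apply RInt_ge_0. lra. exact Hex. intros y _. unfold Bf.
    apply Rlt_le, Rdiv_lt_0_compat. apply exp_pos. apply pos1y2.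
  - replace (exp (- T ^ 2)) with (RInt (fun _ => exp (- T ^ 2)) 0 1).
    2:{ rewrite (RInt_const (V:=R_CompleteNormedModule)). change (@eq R ((1 - 0) * exp (- T ^ 2)) (exp (- T ^ 2))). ring. }
    apply RInt_le. lra. exact Hex. apply ex_RInt_const.
    intros y Hy. unfold Bf. pose proof (pos1y2 y).
    assert (exp (- T ^ 2 * (1 + y ^ 2)) <= exp (- T ^ 2)).
    { apply exp_le. pose proof (pow2_ge_0 T). pose proof (pow2_ge_0 y). nra. }
    pose proof (exp_pos (- T ^ 2 * (1 + y ^ 2))).
    apply Rmult_le_reg_r with (1 + y ^ 2). lra.
    unfold Rdiv. rewrite Rmult_assoc, Rinv_l by lra.
    pose proof (pow2_ge_0 y). pose proof (exp_pos (- T ^ 2)). nra.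
Qed.

Lemma S_ge0 T : 0 <= T -> 0 <= SG T.
Proof.
  intros HT. apply RInt_ge_0; auto. apply g_exRInt. intros; apply Rlt_le, exp_pos.
Qed.

Lemma S_close T : 0 <= T -> Rabs (SG T - sqrt PI / 2) <= 2 / sqrt PI * exp (- T ^ 2).
Proof.
  intros HT. pose proof (Phi_const T). pose proof (B_bounds T). pose proof (S_ge0 T HT).
  pose proof PI_RGT_0. assert (Hs : 0 < sqrt PI) by (apply sqrt_lt_R0; lra).
  pose proof (sqrt_sqrt PI ltac:(lra)) as Hss.
  set (s := sqrt PI) in *. set (E := exp (- T ^ 2)) in *.
  assert (Hprod : (SG T - s / 2) * (SG T + s / 2) = - BG T).
  { replace (- BG T) with (SG T ^ 2 - PI / 4) by lra. rewrite <- Hss. field. }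
  assert (Hd : 0 < SG T + s / 2) by lra.
  assert (Hq : SG T - s / 2 = - BG T / (SG T + s / 2)).
  { rewrite <- Hprod. field. lra. }
  rewrite Hq. unfold Rdiv. rewrite Rabs_mult, Rabs_Ropp, Rabs_inv.
  rewrite (Rabs_right (BG T)) by lra. rewrite (Rabs_right (SG T + s * / 2)) by lra.
  apply Rle_trans with (BG T * / (s / 2)).
  - apply Rmult_le_compat_l. lra. apply Rinv_le_contravar; lra.
  - replace (2 * / s * E) with (E * / (s / 2)) by (field; lra).
    apply Rmult_le_compat_r. apply Rlt_le, Rinv_0_lt_compat; lra. lra.
Qed.

Lemma S_odd T : SG (- T) = - SG T.
Proof.
  unfold SG.
  pose proof (RInt_comp_lin (V:=R_CompleteNormedModule) g (-1) 0 0 T (g_exRInt _ _)) as H.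
  rewrite Rmult_0_r, Rplus_0_r, Rplus_0_r in H.
  replace (-1 * T) with (- T) in H by ring. rewrite <- H.
  rewrite (RInt_ext _ (fun y => scal (-1) (g y))).
  2:{ intros x _. unfold g. f_equal. f_equal. f_equal. ring. }
  rewrite (RInt_scal (V:=R_CompleteNormedModule)) by apply g_exRInt.
  change (scal ?a ?b) with (a * b). ring.
Qed.

Lemma gauss_real eps : 0 < eps -> exists M, 0 <= M /\
  forall u v, u < - M -> M < v -> Rabs (RInt g u v - sqrt PI) < eps.
Proof.
  intros Heps.
  pose proof PI_RGT_0. assert (Hs : 0 < sqrt PI) by (apply sqrt_lt_R0; lra).
  set (e' := eps * sqrt PI / 4).
  assert (He' : 0 < e') by (unfold e'; apply Rdiv_lt_0_compat; [nra|lra]).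
  destruct (decay 0 0 (Rle_refl 0) e' He') as [N [HN HN2]].
  exists N. split; auto. intros u v Hu Hv.
  assert (Hsplit : RInt g u v = SG v + SG (- u)).
  { rewrite S_odd. unfold SG.
    rewrite <- (RInt_Chasles (V:=R_CompleteNormedModule) g u 0 v) by apply g_exRInt.
    change (plus ?a ?b) with (a + b).
    rewrite <- (opp_RInt_swap (V:=R_CompleteNormedModule)) by apply g_exRInt.
    change (opp ?a) with (- a). req. ring. }
  rewrite Hsplit.
  pose proof (S_close v ltac:(lra)). pose proof (S_close (- u) ltac:(lra)).
  assert (Hv' : exp (- v ^ 2) < e').
  { specialize (HN2 v ltac:(rewrite Rabs_right; lra)). simpl in HN2.
    rewrite Rmult_0_l, Rminus_0_l, Rmult_1_l in HN2. exact HN2. }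
  assert (Hu' : exp (- (- u) ^ 2) < e').
  { specialize (HN2 (- u) ltac:(rewrite Rabs_right; lra)). simpl in HN2.
    rewrite Rmult_0_l, Rminus_0_l, Rmult_1_l in HN2. exact HN2. }
  replace (SG v + SG (- u) - sqrt PI) with ((SG v - sqrt PI / 2) + (SG (- u) - sqrt PI / 2)) by field.
  eapply Rle_lt_trans. apply Rabs_triang.
  assert (He2 : 2 / sqrt PI * e' = eps / 2) by (unfold e'; field; lra).
  assert (0 < 2 / sqrt PI) by (apply Rdiv_lt_0_compat; lra).
  assert (2 / sqrt PI * exp (- v ^ 2) < eps / 2) by (rewrite <- He2; apply Rmult_lt_compat_l; auto).
  assert (2 / sqrt PI * exp (- (- u) ^ 2) < eps / 2) by (rewrite <- He2; apply Rmult_lt_compat_l; auto).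
  lra.
Qed.


Lemma RInt_lin2 (f1 f2 : R -> R) a1 a2 u v :
  ex_RInt f1 u v -> ex_RInt f2 u v ->
  RInt (fun x => a1 * f1 x + a2 * f2 x) u v = a1 * RInt f1 u v + a2 * RInt f2 u v.
Proof.
  intros H1 H2.
  rewrite (RInt_plus (V:=R_CompleteNormedModule) (fun x => scal a1 (f1 x)) (fun x => scal a2 (f2 x))).
  - rewrite !(RInt_scal (V:=R_CompleteNormedModule)); auto.
  - apply (ex_RInt_scal (V:=R_CompleteNormedModule)); auto.
  - apply (ex_RInt_scal (V:=R_CompleteNormedModule)); auto.
Qed.

Lemma ex_RInt_lin2 (f1 f2 : R -> R) a1 a2 u v :
  ex_RInt f1 u v -> ex_RInt f2 u v -> ex_RInt (fun x => a1 * f1 x + a2 * f2 x) u v.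
Proof.
  intros H1 H2.
  apply (ex_RInt_plus (V:=R_NormedModule) (fun x => scal a1 (f1 x)) (fun x => scal a2 (f2 x)));
  apply (ex_RInt_scal (V:=R_NormedModule)); auto.
Qed.

Lemma RInt_lin3 (f1 f2 f3 : R -> R) a1 a2 a3 u v :
  ex_RInt f1 u v -> ex_RInt f2 u v -> ex_RInt f3 u v ->
  RInt (fun x => a1 * f1 x + a2 * f2 x + a3 * f3 x) u v =
  a1 * RInt f1 u v + a2 * RInt f2 u v + a3 * RInt f3 u v.
Proof.
  intros H1 H2 H3.
  rewrite (RInt_ext _ (fun x => 1 * (a1 * f1 x + a2 * f2 x) + a3 * f3 x)) by (intros; req; ring).
  rewrite RInt_lin2, RInt_lin2; auto. req; ring.
  apply ex_RInt_lin2; auto.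
Qed.

Lemma c2_exp (h : R -> R -> R) x y : continuity_2d_pt h x y ->
  continuity_2d_pt (fun u v => exp (h u v)) x y.
Proof. intros H. apply continuity_1d_2d_pt_comp; auto. apply cpt_exp. Qed.
Lemma c2_cos (h : R -> R -> R) x y : continuity_2d_pt h x y ->
  continuity_2d_pt (fun u v => cos (h u v)) x y.
Proof. intros H. apply continuity_1d_2d_pt_comp; auto. apply cpt_cos. Qed.
Lemma c2_sin (h : R -> R -> R) x y : continuity_2d_pt h x y ->
  continuity_2d_pt (fun u v => sin (h u v)) x y.
Proof. intros H. apply continuity_1d_2d_pt_comp; auto. apply cpt_sin. Qed.
Lemma c2_pow (h : R -> R -> R) n x y : continuity_2d_pt h x y ->
  continuity_2d_pt (fun u v => h u v ^ n) x y.
Proof.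
  intros H. induction n as [|n IH].
  - apply (continuity_2d_pt_ext (fun _ _ => 1)). intros; reflexivity. apply continuity_2d_pt_const.
  - apply (continuity_2d_pt_mult h (fun u v => h u v ^ n)); auto.
Qed.

Ltac c2d := repeat (first [ apply continuity_2d_pt_id1 | apply continuity_2d_pt_id2
  | apply continuity_2d_pt_const | apply continuity_2d_pt_mult | apply continuity_2d_pt_plus
  | apply continuity_2d_pt_minus | apply continuity_2d_pt_opp | apply c2_exp | apply c2_cos
  | apply c2_sin | apply c2_pow ]).

Ltac fixexp := repeat match goal with
  | |- context [exp ?a] => match goal with
    | |- context [exp ?b] => assert_fails (constr_eq a b); replace a with b by (field || ring)
    end
  | |- context [cos ?a] => match goal with
    | |- context [cos ?b] => assert_fails (constr_eq a b); replace a with b by (field || ring)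
    end
  | |- context [sin ?a] => match goal with
    | |- context [sin ?b] => assert_fails (constr_eq a b); replace a with b by (field || ring)
    end end.

Definition Et be t x := exp (t * be * x - x ^ 2).
Definition fc be ga t x := Et be t x * cos (t * ga * x).
Definition fs be ga t x := Et be t x * sin (t * ga * x).
Definition Pt be ga u v t := RInt (fc be ga t) u v.
Definition Qt be ga u v t := RInt (fs be ga t) u v.

Ltac exri := apply (ex_RInt_continuous (V:=R_CompleteNormedModule)); intros;
  apply cont_of_ex_derive; unfold fc, fs, Et; auto_derive; auto.

Lemma fc_dt be ga t x : is_derive (fun s => fc be ga s x) t
  (x * Et be t x * (be * cos (t * ga * x) - ga * sin (t * ga * x))).
Proof. unfold fc, Et. auto_derive; auto. fixexp. ring. Qed.
Lemma fs_dt be ga t x : is_derive (fun s => fs be ga s x) t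
  (x * Et be t x * (be * sin (t * ga * x) + ga * cos (t * ga * x))).
Proof. unfold fs, Et. auto_derive; auto. fixexp. ring. Qed.

Lemma P_derive be ga u v t : is_derive (Pt be ga u v) t
  (RInt (fun x => x * Et be t x * (be * cos (t * ga * x) - ga * sin (t * ga * x))) u v).
Proof.
  unfold Pt. eapply is_derive_eq.
  apply (is_derive_RInt_param (fun s x => fc be ga s x) u v t).
  - apply filter_forall. intros s x _. eexists. apply fc_dt.
  - intros x _. eapply continuity_2d_pt_ext.
    { intros s y. symmetry. apply is_derive_unique, fc_dt. }
    unfold Et. c2d.
  - apply filter_forall. intros s. exri.
  - apply RInt_ext. intros; apply is_derive_unique, fc_dt.
Qed.

Lemma Q_derive be ga u v t : is_derive (Qt be ga u v) t
  (RInt (fun x => x * Et be t x * (be * sin (t * ga * x) + ga * cos (t * ga * x))) u v).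
Proof.
  unfold Qt. eapply is_derive_eq.
  apply (is_derive_RInt_param (fun s x => fs be ga s x) u v t).
  - apply filter_forall. intros s x _. eexists. apply fs_dt.
  - intros x _. eapply continuity_2d_pt_ext.
    { intros s y. symmetry. apply is_derive_unique, fs_dt. }
    unfold Et. c2d.
  - apply filter_forall. intros s. exri.
  - apply RInt_ext. intros; apply is_derive_unique, fs_dt.
Qed.

Lemma fc_dx be ga t x : is_derive (fc be ga t) x
  (t * be * fc be ga t x + (-2) * (x * fc be ga t x) + (- (t * ga)) * fs be ga t x).
Proof. unfold fc, fs, Et. auto_derive; auto. fixexp. ring. Qed.
Lemma fs_dx be ga t x : is_derive (fs be ga t) x
  (t * be * fs be ga t x + (-2) * (x * fs be ga t x) + (t * ga) * fc be ga t x).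
Proof. unfold fc, fs, Et. auto_derive; auto. fixexp. ring. Qed.

Lemma ibp_c be ga u v t :
  t * be * Pt be ga u v t + (-2) * RInt (fun x => x * fc be ga t x) u v
  + (- (t * ga)) * Qt be ga u v t = fc be ga t v - fc be ga t u.
Proof.
  unfold Pt, Qt. rewrite <- RInt_lin3 by exri.
  apply (is_RInt_unique (V:=R_CompleteNormedModule)).
  apply (is_RInt_derive (V:=R_CompleteNormedModule) (fc be ga t)).
  - intros; apply fc_dx.
  - intros. apply cont_of_ex_derive. unfold fc, fs, Et. auto_derive; auto.
Qed.

Lemma ibp_s be ga u v t :
  t * be * Qt be ga u v t + (-2) * RInt (fun x => x * fs be ga t x) u v
  + (t * ga) * Pt be ga u v t = fs be ga t v - fs be ga t u.
Proof.
  unfold Pt, Qt. rewrite <- RInt_lin3 by exri.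
  apply (is_RInt_unique (V:=R_CompleteNormedModule)).
  apply (is_RInt_derive (V:=R_CompleteNormedModule) (fs be ga t)).
  - intros; apply fs_dx.
  - intros. apply cont_of_ex_derive. unfold fc, fs, Et. auto_derive; auto.
Qed.

Definition bc be ga u v t := fc be ga t v - fc be ga t u.
Definition bs be ga u v t := fs be ga t v - fs be ga t u.
Definition BP be ga u v t := (- be * bc be ga u v t + ga * bs be ga u v t) / 2.
Definition BQ be ga u v t := (- be * bs be ga u v t - ga * bc be ga u v t) / 2.

Lemma P_ode be ga u v t : is_derive (Pt be ga u v) t
  (t / 2 * ((be ^ 2 - ga ^ 2) * Pt be ga u v t - 2 * be * ga * Qt be ga u v t) + BP be ga u v t).
Proof.
  eapply is_derive_eq. apply P_derive.
  rewrite (RInt_ext _ (fun x => be * (x * fc be ga t x) + (- ga) * (x * fs be ga t x))).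
  2:{ intros. unfold fc, fs. req; ring. }
  rewrite RInt_lin2 by exri.
  pose proof (ibp_c be ga u v t) as H1. pose proof (ibp_s be ga u v t) as H2.
  set (Xc := RInt (fun x => x * fc be ga t x) u v) in *.
  set (Xs := RInt (fun x => x * fs be ga t x) u v) in *.
  assert (E1 : Xc = (t * be * Pt be ga u v t - t * ga * Qt be ga u v t - (fc be ga t v - fc be ga t u)) / 2) by lra.
  assert (E2 : Xs = (t * be * Qt be ga u v t + t * ga * Pt be ga u v t - (fs be ga t v - fs be ga t u)) / 2) by lra.
  rewrite E1, E2. unfold BP, bc, bs. req; field.
Qed.

Lemma Q_ode be ga u v t : is_derive (Qt be ga u v) t
  (t / 2 * ((be ^ 2 - ga ^ 2) * Qt be ga u v t + 2 * be * ga * Pt be ga u v t) + BQ be ga u v t).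
Proof.
  eapply is_derive_eq. apply Q_derive.
  rewrite (RInt_ext _ (fun x => be * (x * fs be ga t x) + ga * (x * fc be ga t x))).
  2:{ intros. unfold fc, fs. req; ring. }
  rewrite RInt_lin2 by exri.
  pose proof (ibp_c be ga u v t) as H1. pose proof (ibp_s be ga u v t) as H2.
  set (Xc := RInt (fun x => x * fc be ga t x) u v) in *.
  set (Xs := RInt (fun x => x * fs be ga t x) u v) in *.
  assert (E1 : Xc = (t * be * Pt be ga u v t - t * ga * Qt be ga u v t - (fc be ga t v - fc be ga t u)) / 2) by lra.
  assert (E2 : Xs = (t * be * Qt be ga u v t + t * ga * Pt be ga u v t - (fs be ga t v - fs be ga t u)) / 2) by lra.
  rewrite E1, E2. unfold BQ, bc, bs. req; field.
Qed.

Definition wr be ga t := exp (- t ^ 2 * (be ^ 2 - ga ^ 2) / 4) * cos (t ^ 2 * (2 * be * ga) / 4).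
Definition wi be ga t := - (exp (- t ^ 2 * (be ^ 2 - ga ^ 2) / 4) * sin (t ^ 2 * (2 * be * ga) / 4)).
Definition Hr be ga u v t := wr be ga t * Pt be ga u v t - wi be ga t * Qt be ga u v t.
Definition Hi be ga u v t := wr be ga t * Qt be ga u v t + wi be ga t * Pt be ga u v t.

Lemma wr_d be ga t : is_derive (wr be ga) t
  (- (t / 2) * ((be ^ 2 - ga ^ 2) * wr be ga t - (2 * be * ga) * wi be ga t)).
Proof. unfold wr, wi. auto_derive; auto. fixexp. field. Qed.
Lemma wi_d be ga t : is_derive (wi be ga) t
  (- (t / 2) * ((be ^ 2 - ga ^ 2) * wi be ga t + (2 * be * ga) * wr be ga t)).
Proof. unfold wr, wi. auto_derive; auto. fixexp. field. Qed.

Lemma Hr_d be ga u v t : is_derive (Hr be ga u v) t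
  (wr be ga t * BP be ga u v t - wi be ga t * BQ be ga u v t).
Proof.
  unfold Hr. eapply is_derive_eq.
  apply (is_derive_minus (K:=R_AbsRing) (V:=R_NormedModule));
  apply (Derive.is_derive_mult); [apply wr_d|apply P_ode|apply wi_d|apply Q_ode].
  change (minus ?a ?b) with (a - b). req; field.
Qed.

Lemma Hi_d be ga u v t : is_derive (Hi be ga u v) t
  (wr be ga t * BQ be ga u v t + wi be ga t * BP be ga u v t).
Proof.
  unfold Hi. eapply is_derive_eq.
  apply (is_derive_plus (K:=R_AbsRing) (V:=R_NormedModule));
  apply (Derive.is_derive_mult); [apply wr_d|apply Q_ode|apply wi_d|apply P_ode].
  change (plus ?a ?b) with (a + b). req; field.
Qed.

Lemma Cmod_le_sum (z : C) : Cmod z <= Rabs (Re z) + Rabs (Im z).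
Proof.
  unfold Cmod. rewrite <- (sqrt_square (Rabs (Re z) + Rabs (Im z))).
  2:{ pose proof (Rabs_pos (Re z)); pose proof (Rabs_pos (Im z)); lra. }
  apply sqrt_le_1_alt.
  pose proof (Rabs_pos (Re z)); pose proof (Rabs_pos (Im z)).
  rewrite <- (pow2_abs (fst z)), <- (pow2_abs (snd z)). unfold Re, Im in *. nra.
Qed.

Lemma integrand_comp b x :
  (cexp (b * RtoC x) * RtoC (exp (- x ^ 2)))%C = (fc (Re b) (Im b) 1 x, fs (Re b) (Im b) 1 x).
Proof.
  destruct b as [be ga]. unfold cexp, fc, fs, Et, RtoC, Re, Im. simpl.
  replace (exp (1 * be * x - x * (x * 1))) with (exp (be * x - ga * 0) * exp (- (x * (x * 1))))
    by (rewrite <- exp_plus; f_equal; ring).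
  replace (1 * ga * x) with (be * 0 + ga * x) by ring.
  apply injective_projections; simpl; ring.
Qed.

Lemma exp_bound_t be t x : 0 <= t <= 1 -> Et be t x <= exp (Rabs be * Rabs x - x ^ 2).
Proof.
  intros Ht. unfold Et. apply exp_le.
  assert (t * be * x <= Rabs be * Rabs x).
  { apply Rle_trans with (Rabs (t * be * x)). apply Rle_abs.
    rewrite !Rabs_mult. rewrite (Rabs_right t) by lra.
    pose proof (Rabs_pos be). pose proof (Rabs_pos x).
    assert (0 <= Rabs be * Rabs x) by nra. nra. }
  lra.
Qed.

Lemma fc_bound be ga t x : 0 <= t <= 1 -> Rabs (fc be ga t x) <= exp (Rabs be * Rabs x - x ^ 2).
Proof.
  intros Ht. unfold fc. rewrite Rabs_mult. pose proof (exp_bound_t be t x Ht).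
  unfold Et in *. rewrite Rabs_right by (apply Rle_ge, Rlt_le, exp_pos).
  pose proof (COS_bound (t * ga * x)). pose proof (exp_pos (t * be * x - x ^ 2)).
  assert (Rabs (cos (t * ga * x)) <= 1) by (apply Rabs_le; lra). nra.
Qed.

Lemma fs_bound be ga t x : 0 <= t <= 1 -> Rabs (fs be ga t x) <= exp (Rabs be * Rabs x - x ^ 2).
Proof.
  intros Ht. unfold fs. rewrite Rabs_mult. pose proof (exp_bound_t be t x Ht).
  unfold Et in *. rewrite Rabs_right by (apply Rle_ge, Rlt_le, exp_pos).
  pose proof (SIN_bound (t * ga * x)). pose proof (exp_pos (t * be * x - x ^ 2)).
  assert (Rabs (sin (t * ga * x)) <= 1) by (apply Rabs_le; lra). nra.
Qed.

Definition ee be x := exp (Rabs be * Rabs x - x ^ 2).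

Lemma abs_between x p : Rabs x <= p -> - p <= x <= p.
Proof. intros H. pose proof (Rle_abs x). pose proof (Rle_abs (- x)). rewrite Rabs_Ropp in H1. lra. Qed.

Lemma lin_bound be ga a b c d E : Rabs a + Rabs b <= E -> Rabs c + Rabs d <= E ->
  Rabs ((- be * (a - b) + ga * (c - d)) / 2) <= (Rabs be + Rabs ga) * E /\
  Rabs ((- be * (c - d) - ga * (a - b)) / 2) <= (Rabs be + Rabs ga) * E.
Proof.
  intros H1 H2.
  assert (Hab : Rabs (a - b) <= E).
  { unfold Rminus. eapply Rle_trans. apply Rabs_triang. rewrite Rabs_Ropp. lra. }
  assert (Hcd : Rabs (c - d) <= E).
  { unfold Rminus. eapply Rle_trans. apply Rabs_triang. rewrite Rabs_Ropp. lra. }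
  assert (K1 : Rabs (be * (a - b)) <= Rabs be * E).
  { rewrite Rabs_mult. apply Rmult_le_compat_l. apply Rabs_pos. auto. }
  assert (K2 : Rabs (ga * (c - d)) <= Rabs ga * E).
  { rewrite Rabs_mult. apply Rmult_le_compat_l. apply Rabs_pos. auto. }
  assert (K3 : Rabs (be * (c - d)) <= Rabs be * E).
  { rewrite Rabs_mult. apply Rmult_le_compat_l. apply Rabs_pos. auto. }
  assert (K4 : Rabs (ga * (a - b)) <= Rabs ga * E).
  { rewrite Rabs_mult. apply Rmult_le_compat_l. apply Rabs_pos. auto. }
  apply abs_between in K1, K2, K3, K4.
  assert (0 <= E) by (pose proof (Rabs_pos a); pose proof (Rabs_pos b); lra).
  pose proof (Rabs_pos be). pose proof (Rabs_pos ga).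
  split; apply Rabs_le; split; nra.
Qed.

Lemma BPQ_bound be ga u v t : 0 <= t <= 1 ->
  Rabs (BP be ga u v t) <= (Rabs be + Rabs ga) * (ee be u + ee be v) /\
  Rabs (BQ be ga u v t) <= (Rabs be + Rabs ga) * (ee be u + ee be v).
Proof.
  intros Ht. unfold BP, BQ, bc, bs, ee.
  pose proof (fc_bound be ga t u Ht). pose proof (fc_bound be ga t v Ht).
  pose proof (fs_bound be ga t u Ht). pose proof (fs_bound be ga t v Ht).
  apply lin_bound; lra.
Qed.

Lemma w_bound be ga t : 0 <= t <= 1 ->
  Rabs (wr be ga t) <= exp (Rabs (be ^ 2 - ga ^ 2) / 4) /\
  Rabs (wi be ga t) <= exp (Rabs (be ^ 2 - ga ^ 2) / 4).
Proof.
  intros Ht. unfold wr, wi.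
  assert (HE : exp (- t ^ 2 * (be ^ 2 - ga ^ 2) / 4) <= exp (Rabs (be ^ 2 - ga ^ 2) / 4)).
  { apply exp_le. pose proof (Rle_abs (- (be ^ 2 - ga ^ 2))). rewrite Rabs_Ropp in H.
    pose proof (Rabs_pos (be ^ 2 - ga ^ 2)).
    assert (0 <= t ^ 2 <= 1) by (split; [apply pow2_ge_0| simpl; nra]).
    set (r := be ^ 2 - ga ^ 2) in *. set (q := Rabs r) in *. set (s := t ^ 2) in *.
    assert (- s * r <= q) by nra. lra. }
  pose proof (exp_pos (- t ^ 2 * (be ^ 2 - ga ^ 2) / 4)).
  pose proof (COS_bound (t ^ 2 * (2 * be * ga) / 4)). pose proof (SIN_bound (t ^ 2 * (2 * be * ga) / 4)).
  rewrite ?Rabs_Ropp, !Rabs_mult, (Rabs_right (exp _)) by lra.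
  assert (Rabs (cos (t ^ 2 * (2 * be * ga) / 4)) <= 1) by (apply Rabs_le; lra).
  assert (Rabs (sin (t ^ 2 * (2 * be * ga) / 4)) <= 1) by (apply Rabs_le; lra).
  pose proof (Rabs_pos (cos (t ^ 2 * (2 * be * ga) / 4))).
  pose proof (Rabs_pos (sin (t ^ 2 * (2 * be * ga) / 4))).
  split; nra.
Qed.

Lemma H_diff be ga u v :
  Rabs (Hr be ga u v 1 - Hr be ga u v 0) <=
    2 * exp (Rabs (be ^ 2 - ga ^ 2) / 4) * (Rabs be + Rabs ga) * (ee be u + ee be v) /\
  Rabs (Hi be ga u v 1 - Hi be ga u v 0) <=
    2 * exp (Rabs (be ^ 2 - ga ^ 2) / 4) * (Rabs be + Rabs ga) * (ee be u + ee be v).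
Proof.
  set (W := exp (Rabs (be ^ 2 - ga ^ 2) / 4)).
  set (Z := (Rabs be + Rabs ga) * (ee be u + ee be v)).
  assert (key : forall c, 0 <= c <= 1 -> forall p q r s : R,
    Rabs p <= W -> Rabs q <= Z -> Rabs r <= W -> Rabs s <= Z ->
    Rabs (p * q - r * s) <= 2 * W * Z /\ Rabs (p * q + r * s) <= 2 * W * Z).
  { intros c _ p q r s H1 H2 H3 H4.
    assert (Rabs (p * q) <= W * Z).
    { rewrite Rabs_mult. apply Rmult_le_compat; auto; apply Rabs_pos. }
    assert (Rabs (r * s) <= W * Z).
    { rewrite Rabs_mult. apply Rmult_le_compat; auto; apply Rabs_pos. }
    split.
    - unfold Rminus. eapply Rle_trans. apply Rabs_triang. rewrite Rabs_Ropp. lra.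
    - eapply Rle_trans. apply Rabs_triang. lra. }
  split.
  - destruct (MVT_gen (Hr be ga u v) 0 1 (fun t => wr be ga t * BP be ga u v t - wi be ga t * BQ be ga u v t))
      as [c [Hc E]].
    + intros; apply Hr_d.
    + intros x _. apply cpt_of_ex_derive. eexists; apply Hr_d.
    + rewrite Rmin_left, Rmax_right in Hc by lra.
      rewrite E, Rminus_0_r, Rmult_1_r.
      destruct (w_bound be ga c Hc). destruct (BPQ_bound be ga u v c Hc).
      replace (2 * W * (Rabs be + Rabs ga) * (ee be u + ee be v)) with (2 * W * Z) by (unfold Z; ring).
      apply (key c Hc); auto.
  - destruct (MVT_gen (Hi be ga u v) 0 1 (fun t => wr be ga t * BQ be ga u v t + wi be ga t * BP be ga u v t))
      as [c [Hc E]].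
    + intros; apply Hi_d.
    + intros x _. apply cpt_of_ex_derive. eexists; apply Hi_d.
    + rewrite Rmin_left, Rmax_right in Hc by lra.
      rewrite E, Rminus_0_r, Rmult_1_r.
      destruct (w_bound be ga c Hc). destruct (BPQ_bound be ga u v c Hc).
      replace (2 * W * (Rabs be + Rabs ga) * (ee be u + ee be v)) with (2 * W * Z) by (unfold Z; ring).
      apply (key c Hc); auto.
Qed.

Lemma H_zero be ga u v : Hr be ga u v 0 = RInt g u v /\ Hi be ga u v 0 = 0.
Proof.
  assert (W1 : wr be ga 0 = 1).
  { unfold wr. replace (- 0 ^ 2 * (be ^ 2 - ga ^ 2) / 4) with 0 by field.
    replace (0 ^ 2 * (2 * be * ga) / 4) with 0 by field. rewrite exp_0, cos_0. ring. }
  assert (W2 : wi be ga 0 = 0).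
  { unfold wi. replace (0 ^ 2 * (2 * be * ga) / 4) with 0 by field. rewrite sin_0. ring. }
  assert (P0 : Pt be ga u v 0 = RInt g u v).
  { unfold Pt. apply RInt_ext. intros. unfold fc, Et, g.
    replace (0 * be * x - x ^ 2) with (- x ^ 2) by ring.
    replace (0 * ga * x) with 0 by ring. rewrite cos_0. req; ring. }
  assert (Q0 : Qt be ga u v 0 = 0).
  { unfold Qt. rewrite (RInt_ext _ (fun _ => 0)).
    rewrite (RInt_const (V:=R_CompleteNormedModule)). change (scal ?a ?b) with (a * b). req; ring.
    intros. unfold fs. replace (0 * ga * x) with 0 by ring. rewrite sin_0. req; ring. }
  unfold Hr, Hi. rewrite W1, W2, P0, Q0. split; ring.
Qed.

Lemma cexp_eq w r i : Re w = r -> Im w = i -> cexp w = (exp r * cos i, exp r * sin i).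
Proof. intros H1 H2. unfold cexp. rewrite H1, H2. reflexivity. Qed.

Lemma F1_eq (b : C) u v :
  ((Pt (Re b) (Im b) u v 1, Qt (Re b) (Im b) u v 1) : C) =
  (cexp (b * b / RtoC 4) * (Hr (Re b) (Im b) u v 1, Hi (Re b) (Im b) u v 1))%C.
Proof.
  set (be := Re b). set (ga := Im b).
  assert (Hw : cexp (- (b * b) / RtoC 4)%C = (wr be ga 1, wi be ga 1)).
  { rewrite (cexp_eq _ (- (be ^ 2 - ga ^ 2) / 4) (- (2 * be * ga) / 4)).
    - unfold wr, wi. replace (- 1 ^ 2 * (be ^ 2 - ga ^ 2) / 4) with (- (be ^ 2 - ga ^ 2) / 4) by field.
      replace (1 ^ 2 * (2 * be * ga) / 4) with ((2 * be * ga) / 4) by field.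
      replace (- (2 * be * ga) / 4) with (- ((2 * be * ga) / 4)) by field.
      rewrite cos_neg, sin_neg. apply injective_projections; simpl; ring.
    - unfold be, ga. destruct b as [p q]. simpl. field.
    - unfold be, ga. destruct b as [p q]. simpl. field. }
  assert (Hc : (cexp (b * b / RtoC 4) * cexp (- (b * b) / RtoC 4))%C = RtoC 1).
  { rewrite <- cexp_add. rewrite <- cexp_0. f_equal.
    assert (RtoC 4 <> RtoC 0) by (intro H; apply RtoC_inj in H; lra). field; auto. }
  assert (HH : ((Hr be ga u v 1, Hi be ga u v 1) : C) =
               (cexp (- (b * b) / RtoC 4) * (Pt be ga u v 1, Qt be ga u v 1))%C).
  { rewrite Hw. unfold Hr, Hi. apply injective_projections; simpl; ring. }
  rewrite HH. rewrite Cmult_assoc, Hc. rewrite Cmult_1_l. reflexivity.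
Qed.

Lemma gauss_C (b : C) :
  IG (fun x => cexp (b * RtoC x) * RtoC (exp (- x ^ 2)))%C (RtoC (sqrt PI) * cexp (b * b / RtoC 4))%C.
Proof.
  set (be := Re b). set (ga := Im b).
  exists (fun u v => (Pt be ga u v 1, Qt be ga u v 1) : C). split.
  - intros u v. apply is_RInt_C_pair.
    + apply (is_RInt_ext (fc be ga 1)).
      { intros. rewrite integrand_comp. reflexivity. }
      apply (RInt_correct (V:=R_CompleteNormedModule)). exri.
    + apply (is_RInt_ext (fs be ga 1)).
      { intros. rewrite integrand_comp. reflexivity. }
      apply (RInt_correct (V:=R_CompleteNormedModule)). exri.
  - intros eps Heps.
    set (c := cexp (b * b / RtoC 4)).
    set (c0 := Cmod c).
    assert (Hc0 : 0 < c0) by (unfold c0, c; rewrite Cmod_cexp; apply exp_pos).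
    set (K := 2 * exp (Rabs (be ^ 2 - ga ^ 2) / 4) * (Rabs be + Rabs ga)).
    assert (HK : 0 <= K).
    { unfold K. pose proof (exp_pos (Rabs (be ^ 2 - ga ^ 2) / 4)).
      pose proof (Rabs_pos be). pose proof (Rabs_pos ga). nra. }
    set (T := eps / c0).
    assert (HT : 0 < T) by (unfold T; apply Rdiv_lt_0_compat; auto).
    set (d := T / (8 * K + 8)).
    assert (Hd : 0 < d) by (unfold d; apply Rdiv_lt_0_compat; lra).
    destruct (decay 0 (Rabs be) (Rabs_pos be) d Hd) as [N1 [HN1 HN1']].
    destruct (gauss_real (T / 2)) as [N2 [HN2 HN2']]. lra.
    exists (Rmax N1 N2). split. { eapply Rle_trans; [exact HN1|apply Rmax_l]. }
    intros u v Hu Hv.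
    pose proof (Rmax_l N1 N2). pose proof (Rmax_r N1 N2).
    assert (Eu : ee be u < d).
    { specialize (HN1' u ltac:(rewrite Rabs_left; lra)). simpl in HN1'. rewrite Rmult_1_l in HN1'. exact HN1'. }
    assert (Ev : ee be v < d).
    { specialize (HN1' v ltac:(rewrite Rabs_right; lra)). simpl in HN1'. rewrite Rmult_1_l in HN1'. exact HN1'. }
    specialize (HN2' u v ltac:(lra) ltac:(lra)).
    destruct (H_diff be ga u v) as [D1 D2]. fold K in D1, D2.
    destruct (H_zero be ga u v) as [Z1 Z2].
    pose proof (F1_eq b u v) as HF. fold be ga in HF. rewrite HF. fold c.
    replace ((c * (Hr be ga u v 1, Hi be ga u v 1))%C - RtoC (sqrt PI) * c)%C with
      (c * ((((Hr be ga u v 1 - Hr be ga u v 0)%R, (Hi be ga u v 1 - Hi be ga u v 0)%R) : C)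
            + RtoC (RInt g u v - sqrt PI)%R))%C.
    2:{ rewrite Z1, Z2. unfold RtoC. apply injective_projections; simpl; ring. }
    rewrite Cmod_mult. fold c0.
    assert (Cmod ((((Hr be ga u v 1 - Hr be ga u v 0)%R, (Hi be ga u v 1 - Hi be ga u v 0)%R) : C)
            + RtoC (RInt g u v - sqrt PI)%R)%C < T).
    { eapply Rle_lt_trans. apply Cmod_triangle.
      rewrite Cmod_R. eapply Rle_lt_trans.
      apply Rplus_le_compat_r. apply Cmod_le_sum. simpl.
      assert (4 * K * d < T / 2).
      { unfold d. apply Rmult_lt_reg_r with (8 * K + 8). lra.
        field_simplify; [|lra]. nra. }
      assert (K * (ee be u + ee be v) <= K * (2 * d)).
      { apply Rmult_le_compat_l; auto. lra. }
      lra. }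
    unfold T in H1. apply Rmult_lt_compat_l with (r := c0) in H1; auto.
    replace (c0 * (eps / c0)) with eps in H1 by (field; lra). exact H1.
Qed.


Lemma L2_bdry (phi : R -> C) :
  (forall eps, 0 < eps -> exists N, 0 <= N /\ forall x, N < Rabs x -> Cmod (phi x) < eps) ->
  L2 (fun u v => phi v - phi u)%C (RtoC 0).
Proof.
  intros H eps Heps. destruct (H (eps / 2)) as [N [HN HN2]]. lra.
  exists N. split; auto. intros u v Hu Hv.
  replace (phi v - phi u - RtoC 0)%C with (phi v + - phi u)%C by ring.
  eapply Rle_lt_trans. apply Cmod_triangle. rewrite Cmod_opp.
  pose proof (HN2 u ltac:(rewrite Rabs_left; lra)). pose proof (HN2 v ltac:(rewrite Rabs_right; lra)).
  lra.
Qed.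

Definition phi (b : C) (k : nat) (x : R) : C := (cexp (b * RtoC x) * RtoC (DH k x))%C.

Lemma phi_re b k x : Re (phi b k x) = exp (Re b * x) * cos (Im b * x) * DH k x.
Proof.
  unfold phi, cexp. destruct b as [p q]. unfold Re, Im, RtoC. simpl.
  replace (p * x - q * 0) with (p * x) by ring. replace (p * 0 + q * x) with (q * x) by ring. ring.
Qed.
Lemma phi_im b k x : Im (phi b k x) = exp (Re b * x) * sin (Im b * x) * DH k x.
Proof.
  unfold phi, cexp. destruct b as [p q]. unfold Re, Im, RtoC. simpl.
  replace (p * x - q * 0) with (p * x) by ring. replace (p * 0 + q * x) with (q * x) by ring. ring.
Qed.

Lemma phi_decay b k : forall eps, 0 < eps -> exists N, 0 <= N /\ forall x, N < Rabs x -> Cmod (phi b k x) < eps.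
Proof.
  intros eps Heps. destruct (D_bound k) as [M [HM HB]].
  destruct (decay k (Rabs (Re b)) (Rabs_pos _) (eps / (M + 1))) as [N [HN HN2]].
  { apply Rdiv_lt_0_compat; lra. }
  exists N. split; auto. intros x Hx.
  unfold phi. rewrite Cmod_mult, Cmod_cexp, Cmod_R.
  specialize (HN2 x Hx). specialize (HB x).
  assert (Re (b * RtoC x)%C = Re b * x) by (destruct b; unfold Re, RtoC; simpl; ring).
  rewrite H.
  assert (exp (Re b * x) <= exp (Rabs (Re b) * Rabs x)).
  { apply exp_le. rewrite <- Rabs_mult. apply Rle_abs. }
  assert (exp (Rabs (Re b) * Rabs x) * exp (- x ^ 2) = exp (Rabs (Re b) * Rabs x - x ^ 2))
    by (rewrite <- exp_plus; f_equal; ring).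
  pose proof (exp_pos (Re b * x)). pose proof (exp_pos (- x ^ 2)).
  pose proof (exp_pos (Rabs (Re b) * Rabs x)).
  assert (0 <= (1 + Rabs x) ^ k) by (apply pow_le; pose proof (Rabs_pos x); lra).
  pose proof (exp_pos (Rabs (Re b) * Rabs x - x ^ 2)).
  set (P := (1 + Rabs x) ^ k) in *.
  set (E1 := exp (Rabs (Re b) * Rabs x - x ^ 2)) in *.
  assert (Rabs (DH k x) * exp (Re b * x) <= M * P * E1).
  { eapply Rle_trans. apply Rmult_le_compat_r. lra. exact HB.
    rewrite <- H1. assert (0 <= M * P * exp (- x ^ 2)) by (apply Rmult_le_pos; [apply Rmult_le_pos|]; lra).
    replace (M * P * (exp (Rabs (Re b) * Rabs x) * exp (- x ^ 2))) with (M * P * exp (- x ^ 2) * exp (Rabs (Re b) * Rabs x)) by ring.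
    apply Rmult_le_compat_l; auto. }
  assert (M * P * E1 < eps).
  { apply Rle_lt_trans with ((M + 1) * (P * E1)). assert (0 <= P * E1) by (apply Rmult_le_pos; lra). replace ((M + 1) * (P * E1)) with (M * P * E1 + P * E1) by ring. lra.
    apply Rmult_lt_compat_l with (r := M + 1) in HN2; [|lra].
    replace ((M + 1) * (eps / (M + 1))) with eps in HN2 by (field; lra). exact HN2. }
  nra.
Qed.

Lemma phi_FTC b k u v :
  @is_RInt C_R_NormedModule (fun x => b * phi b k x + phi b (S k) x)%C u v (phi b k v - phi b k u)%C.
Proof.
  apply is_RInt_C_pair.
  - apply (is_RInt_ext (fun x => Re b * (exp (Re b * x) * cos (Im b * x) * DH k x)
                                - Im b * (exp (Re b * x) * sin (Im b * x) * DH k x)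
                                + exp (Re b * x) * cos (Im b * x) * DH (S k) x)).
    { intros x _. simpl. rewrite <- (phi_re b k x), <- (phi_im b k x), <- (phi_re b (S k) x).
      unfold Re, Im. simpl. ring. }
    replace (Re (phi b k v - phi b k u)%C) with
      (exp (Re b * v) * cos (Im b * v) * DH k v - exp (Re b * u) * cos (Im b * u) * DH k u).
    2:{ rewrite <- phi_re, <- phi_re. reflexivity. }
    apply (is_RInt_derive (V:=R_CompleteNormedModule) (fun x => exp (Re b * x) * cos (Im b * x) * DH k x)).
    + intros x _. auto_derive. apply D_ex_derive. rewrite <- DS. req; ring.
    + intros x _. apply cont_of_ex_derive. auto_derive. repeat split; apply D_ex_derive.
  - apply (is_RInt_ext (fun x => Re b * (exp (Re b * x) * sin (Im b * x) * DH k x)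
                                + Im b * (exp (Re b * x) * cos (Im b * x) * DH k x)
                                + exp (Re b * x) * sin (Im b * x) * DH (S k) x)).
    { intros x _. simpl. rewrite <- (phi_re b k x), <- (phi_im b k x), <- (phi_im b (S k) x).
      unfold Re, Im. simpl. ring. }
    replace (Im (phi b k v - phi b k u)%C) with
      (exp (Re b * v) * sin (Im b * v) * DH k v - exp (Re b * u) * sin (Im b * u) * DH k u).
    2:{ rewrite <- phi_im, <- phi_im. reflexivity. }
    apply (is_RInt_derive (V:=R_CompleteNormedModule) (fun x => exp (Re b * x) * sin (Im b * x) * DH k x)).
    + intros x _. auto_derive. apply D_ex_derive. rewrite <- DS. req; ring.
    + intros x _. apply cont_of_ex_derive. auto_derive. repeat split; apply D_ex_derive.
Qed.

Lemma IG_val f l l' : IG f l -> l = l' -> IG f l'.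
Proof. intros H ->; auto. Qed.

Lemma core (b : C) (k : nat) :
  IG (phi b k) (pow_n (K:=C_Ring) (- b)%C k * (RtoC (sqrt PI) * cexp (b * b / RtoC 4)))%C.
Proof.
  induction k as [|k IH].
  - eapply IG_val; [apply (IG_ext (fun x => cexp (b * RtoC x) * RtoC (exp (- x ^ 2)))%C (phi b 0)); [intros; reflexivity|apply gauss_C]|].
    simpl. rewrite (mult_one_l (K:=C_Ring)). reflexivity.
  - destruct IH as [F [HF HL]].
    exists (fun u v => (phi b k v - phi b k u) + (- b) * F u v)%C. split.
    + intros u v. eapply is_RInt_ext; [|apply is_RInt_Cplus; [apply phi_FTC|apply is_RInt_Cmult; apply HF]].
      intros x _. simpl. ring.
    + eapply L2_ext; [intros; reflexivity|].
      replace (pow_n (K:=C_Ring) (- b)%C (S k) * (RtoC (sqrt PI) * cexp (b * b / RtoC 4)))%C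
        with (RtoC 0 + (- b) * (pow_n (K:=C_Ring) (- b)%C k * (RtoC (sqrt PI) * cexp (b * b / RtoC 4))))%C.
      * apply L2_plus. apply L2_bdry, phi_decay. apply L2_mult, HL.
      * simpl. change (mult (- b)%C (pow_n (K:=C_Ring) (- b)%C k)) with ((- b) * pow_n (K:=C_Ring) (- b)%C k)%C. ring.
Qed.


Lemma pow_n_Cmult (a c : C) k :
  pow_n (K:=C_Ring) (a * c)%C k = (pow_n (K:=C_Ring) a k * pow_n (K:=C_Ring) c k)%C.
Proof.
  induction k as [|k IH].
  - simpl. change (@one C_Ring) with (RtoC 1). ring.
  - simpl. change (mult (a * c)%C (pow_n (K:=C_Ring) (a * c)%C k)) with ((a * c) * pow_n (K:=C_Ring) (a * c)%C k)%C.
    change (mult a (pow_n (K:=C_Ring) a k)) with (a * pow_n (K:=C_Ring) a k)%C.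
    change (mult c (pow_n (K:=C_Ring) c k)) with (c * pow_n (K:=C_Ring) c k)%C.
    rewrite IH. ring.
Qed.

Lemma pow_n_RtoC r k : pow_n (K:=C_Ring) (RtoC r) k = RtoC (r ^ k).
Proof.
  induction k as [|k IH].
  - reflexivity.
  - simpl. change (mult (RtoC r) (pow_n (K:=C_Ring) (RtoC r) k)) with (RtoC r * pow_n (K:=C_Ring) (RtoC r) k)%C.
    rewrite IH, RtoC_mult. reflexivity.
Qed.

Lemma sqrt_pow2n k : sqrt (2 ^ k) = sqrt 2 ^ k.
Proof.
  induction k as [|k IH].
  - simpl. apply sqrt_1.
  - simpl. rewrite sqrt_mult by (try apply pow_le; lra). rewrite IH. reflexivity.
Qed.

Lemma sqrt_sqrt_PI : sqrt (sqrt PI) = Rpower PI (1 / 4).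
Proof.
  pose proof PI_RGT_0.
  rewrite <- (Rpower_sqrt PI) by lra.
  rewrite <- Rpower_sqrt by (unfold Rpower; apply exp_pos).
  rewrite Rpower_mult. f_equal. field.
Qed.

Lemma const_k k : / Rpower PI (1 / 4) * / sqrt (2 ^ k * INR (fact k) * sqrt PI) * (-1) ^ k
  * (- sqrt 2) ^ k * sqrt PI = / sqrt (INR (fact k)).
Proof.
  pose proof PI_RGT_0.
  assert (Hf : 0 < INR (fact k)) by (apply lt_0_INR, lt_O_fact).
  assert (Hs2 : 0 < sqrt 2) by (apply sqrt_lt_R0; lra).
  assert (Hsp : 0 <= sqrt PI) by apply sqrt_pos.
  rewrite sqrt_mult by (try apply Rmult_le_pos; try apply pow_le; lra).
  rewrite sqrt_mult by (try apply pow_le; lra).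
  rewrite sqrt_pow2n, sqrt_sqrt_PI.
  assert (Hq : Rpower PI (1 / 4) * Rpower PI (1 / 4) = sqrt PI).
  { rewrite <- sqrt_sqrt_PI. apply sqrt_sqrt; auto. }
  assert (Hq0 : 0 < Rpower PI (1 / 4)) by (unfold Rpower; apply exp_pos).
  assert (Hsk : 0 < sqrt 2 ^ k) by (apply pow_lt; auto).
  assert (Hfk : 0 < sqrt (INR (fact k))) by (apply sqrt_lt_R0; auto).
  assert (Hm : (-1) ^ k * (- sqrt 2) ^ k = sqrt 2 ^ k) by (rewrite <- Rpow_mult_distr; f_equal; ring).
  set (q := Rpower PI (1 / 4)) in *. set (f := sqrt (INR (fact k))) in *. set (s := sqrt 2 ^ k) in *.
  transitivity (/ q * / (s * f * q) * ((-1) ^ k * (- sqrt 2) ^ k) * sqrt PI). ring.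
  rewrite Hm. fold s. rewrite <- Hq. field. repeat split; lra.
Qed.

Lemma Ci2 : (Ci * Ci)%C = (- RtoC 1)%C.
Proof. apply injective_projections; simpl; ring. Qed.

Lemma s_nz : RtoC (sqrt 2) <> RtoC 0.
Proof.
  intros H. apply RtoC_inj in H. pose proof (sqrt_lt_R0 2 ltac:(lra)). lra.
Qed.

Lemma cexp_val (z : C) (l : R) :
  (cexp (- (z * z) / RtoC 2) * cexp ((RtoC (sqrt 2) * z + Ci * RtoC l) * (RtoC (sqrt 2) * z + Ci * RtoC l) / RtoC 4))%C
  = cexp (Ci * z / RtoC (sqrt 2) * RtoC l - RtoC (/ 4 * l ^ 2))%C.
Proof.
  rewrite <- cexp_add. f_equal.
  pose proof s_nz as Hs0.
  set (s := RtoC (sqrt 2)) in *.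
  assert (H2 : RtoC 2 = (s * s)%C).
  { unfold s. rewrite <- RtoC_mult, sqrt_sqrt by lra. reflexivity. }
  assert (H4 : RtoC 4 = (s * s * (s * s))%C).
  { rewrite <- H2, <- RtoC_mult. f_equal; ring. }
  replace (RtoC (/ 4 * l ^ 2)) with (RtoC l * RtoC l / RtoC 4)%C.
  2:{ rewrite <- RtoC_mult, <- RtoC_div by lra. f_equal; field. }
  rewrite H4, H2.
  transitivity (- (z * z) / (s * s) + (s * s * z * z + (Ci * Ci) * RtoC l * RtoC l + RtoC 2 * s * z * Ci * RtoC l) / (s * s * (s * s)))%C.
  { field; auto. }
  rewrite Ci2, H2. field; auto.
Qed.

Lemma two_nz : RtoC 2 <> RtoC 0.
Proof. intros H. apply RtoC_inj in H. lra. Qed.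

Lemma cexp_split z x l :
  (cexp (- (z * z + RtoC (x * x)) / RtoC 2 + RtoC (sqrt 2) * z * RtoC x) * cexp (Ci * RtoC (l * x)))%C
  = (cexp (- (z * z) / RtoC 2) * cexp ((RtoC (sqrt 2) * z + Ci * RtoC l) * RtoC x) * RtoC (exp (- (x * x) / 2)))%C.
Proof.
  rewrite <- cexp_R, <- !cexp_add. f_equal.
  rewrite RtoC_div by lra. rewrite RtoC_opp, !RtoC_mult.
  pose proof two_nz. field; auto.
Qed.

Lemma hreal k x : hermite_fun k x * exp (- (x * x) / 2) =
  / sqrt (2 ^ k * INR (fact k) * sqrt PI) * (-1) ^ k * DH k x.
Proof.
  unfold hermite_fun, hermiteH. change (Derive_n (fun t => exp (- t ^ 2)) k x) with (DH k x).
  assert (E : exp (x ^ 2) * exp (- x ^ 2 / 2) * exp (- (x * x) / 2) = 1).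
  { rewrite <- !exp_plus. rewrite <- exp_0. f_equal. field. }
  set (N := / sqrt (2 ^ k * INR (fact k) * sqrt PI)).
  transitivity (N * (-1) ^ k * DH k x * (exp (x ^ 2) * exp (- x ^ 2 / 2) * exp (- (x * x) / 2))).
  ring. rewrite E. ring.
Qed.

Lemma sum_n_Cmult_l (c : C) (f : nat -> C) n : (c * sum_n f n)%C = sum_n (fun j => c * f j)%C n.
Proof.
  induction n as [|n IH].
  - rewrite !sum_O. reflexivity.
  - rewrite !sum_Sn. rewrite <- IH. change plus with Cplus. ring.
Qed.

Definition Kc k z := (RtoC (/ Rpower PI (1 / 4) * / sqrt (2 ^ k * INR (fact k) * sqrt PI) * (-1) ^ k)
  * cexp (- (z * z) / RtoC 2))%C.
Definition bj (n j : nat) (z : C) := (RtoC (sqrt 2) * z + Ci * RtoC (lam n j))%C.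

Lemma integrand_eq k n a z x :
  SB_integrand (Hkn k n a) z x =
  sum_n (fun j => RtoC (Ccoef n j a) * (Kc k z * phi (bj n j z) k x))%C n.
Proof.
  unfold SB_integrand, Hkn, Defs.Fn.
  set (A := (RtoC (/ Rpower PI (1 / 4)) * cexp (- (z * z + RtoC (x * x)) / RtoC 2 + RtoC (sqrt 2) * z * RtoC x))%C).
  transitivity ((A * RtoC (hermite_fun k x)) *
    (sum_n (fun j : nat => (RtoC (Ccoef n j a) * cexp (Ci * RtoC (lam n j * x)))%C) n))%C.
  { ring. }
  rewrite sum_n_Cmult_l. apply sum_n_ext. intros j.
  unfold A, Kc, phi, bj.
  match goal with |- ?a = ?b => change (@eq C a b) end.
  transitivity (RtoC (/ Rpower PI (1 / 4)) * RtoC (Ccoef n j a) * RtoC (hermite_fun k x) *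
    (cexp (- (z * z + RtoC (x * x)) / RtoC 2 + RtoC (sqrt 2) * z * RtoC x) * cexp (Ci * RtoC (lam n j * x))))%C.
  { ring. }
  rewrite cexp_split.
  transitivity (RtoC (/ Rpower PI (1 / 4)) * RtoC (Ccoef n j a) * RtoC (hermite_fun k x * exp (- (x * x) / 2)) *
    cexp (- (z * z) / RtoC 2) * cexp ((RtoC (sqrt 2) * z + Ci * RtoC (lam n j)) * RtoC x))%C.
  { rewrite RtoC_mult. ring. }
  rewrite hreal. rewrite !RtoC_mult. ring.
Qed.

Theorem theorem3p19 (a : R) (k n : nat) (z : C) :
  1 < a -> (1 <= n)%nat ->
  is_SegalBargmann (Hkn k n a) z
    ((RtoC (/ sqrt (INR (fact k))) *
      sum_n (fun j =>
        RtoC (Ccoef n j a) *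
        pow_n (z + Ci / RtoC (sqrt 2) * RtoC (lam n j)) k *
        cexp (Ci * z / RtoC (sqrt 2) * RtoC (lam n j)
              - RtoC (/ 4 * (lam n j) ^ 2))) n)%C).
Proof.
  intros _ _. unfold is_SegalBargmann. apply IG_gen.
  eapply IG_val.
  - apply (IG_ext (fun x => sum_n (fun j => RtoC (Ccoef n j a) * (Kc k z * phi (bj n j z) k x))%C n)).
    { intros x. symmetry. apply integrand_eq. }
    apply (IG_sum (fun j x => RtoC (Ccoef n j a) * (Kc k z * phi (bj n j z) k x))%C).
    intros j _. apply IG_mult. apply IG_mult. apply core.
  - rewrite sum_n_Cmult_l. apply sum_n_ext. intros j.
    match goal with |- ?a = ?b => change (@eq C a b) end.
    unfold Kc, bj. set (L := lam n j).
    assert (Hb : (- (RtoC (sqrt 2) * z + Ci * RtoC L))%C =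
                 (RtoC (- sqrt 2) * (z + Ci / RtoC (sqrt 2) * RtoC L))%C).
    { rewrite RtoC_opp. pose proof s_nz. field; auto. }
    rewrite Hb, pow_n_Cmult, pow_n_RtoC.
    set (w := (z + Ci / RtoC (sqrt 2) * RtoC L)%C).
    transitivity (RtoC (Ccoef n j a) *
      RtoC (/ Rpower PI (1 / 4) * / sqrt (2 ^ k * INR (fact k) * sqrt PI) * (-1) ^ k * (- sqrt 2) ^ k * sqrt PI)
      * pow_n (K:=C_Ring) w k
      * (cexp (- (z * z) / RtoC 2) * cexp ((RtoC (sqrt 2) * z + Ci * RtoC L) * (RtoC (sqrt 2) * z + Ci * RtoC L) / RtoC 4)))%C.
    { rewrite !RtoC_mult. ring. }
    rewrite const_k, cexp_val. ring.
Qed.
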